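(* Let $(X,\sigma)$ be a complete metric-like space, and let $\varphi:(0,\infty)\to(1,\infty)$ be a function such that for every sequence $\{t_n\}\subset(0,\infty)$, $\varphi(t_n)\to 1$ from above implies $t_n\to0$. Suppose $S,T:X\to X$ are onto mappings such that $\sigma(Tx,Sy)\geq \varphi(\sigma(x,y))\,\sigma(x,y)$ for all $x,y\in X$ with $\sigma(x,y)>0$. Then $T$ and $S$ have a common fixed point.
   Context: A metric-like on $X$ is a map $\sigma:X\times X\to[0,\infty)$ such that for all $x,y,z\in X$: $\sigma(x,y)=0\Rightarrow x=y$; $\sigma(x,y)=\sigma(y,x)$; $\sigma(x,z)\le\sigma(x,y)+\sigma(y,z)$. A sequence $\{x_n\}$ converges to $x$ if $\lim_n\sigma(x_n,x)=\sigma(x,x)$; it is Cauchy if $\lim_{n,m}\sigma(x_n,x_m)$ exists and is finite; $(X,\sigma)$ is complete if every Cauchy sequence $\{x_n\}$ converges to some $x$ with $\lim_{n,m}\sigma(x_n,x_m)=\sigma(x,x)=\lim_n\sigma(x_n,x)$. *)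

(* Defs.v *)
From Stdlib Require Import Reals.
Open Scope R_scope.

Definition metric_like {X : Type} (sigma : X -> X -> R) : Prop :=
  (forall x y, 0 <= sigma x y) /\
  (forall x y, sigma x y = 0 -> x = y) /\
  (forall x y, sigma x y = sigma y x) /\
  (forall x y z, sigma x z <= sigma x y + sigma y z).

Definition ml_converges {X : Type} (sigma : X -> X -> R) (u : nat -> X) (x : X) : Prop :=
  Un_cv (fun n => sigma (u n) x) (sigma x x).

Definition double_lim (a : nat -> nat -> R) (L : R) : Prop :=
  forall eps, eps > 0 -> exists N : nat, forall n m, (n >= N)%nat -> (m >= N)%nat ->
    Rabs (a n m - L) < eps.

Definition ml_cauchy {X : Type} (sigma : X -> X -> R) (u : nat -> X) : Prop :=
  exists L : R, double_lim (fun n m => sigma (u n) (u m)) L.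

Definition ml_complete {X : Type} (sigma : X -> X -> R) : Prop :=
  forall u : nat -> X, ml_cauchy sigma u ->
    exists x : X,
      double_lim (fun n m => sigma (u n) (u m)) (sigma x x) /\
      ml_converges sigma u x.

(* Main.v *)
Require Import Defs.
From Stdlib Require Import Reals.
From Stdlib Require Import Lra Lia ClassicalEpsilon Classical.
Open Scope R_scope.

Lemma phi_lemma (phi : R -> R)
  (Hphi_range : forall t, 0 < t -> 1 < phi t)
  (Hphi : forall t : nat -> R, (forall n, 0 < t n) ->
            Un_cv (fun n => phi (t n)) 1 -> Un_cv t 0)
  (a e : nat -> R) (eps : R) : eps > 0 -> (forall k, eps <= a k) ->
  (forall k, a k * (phi (a k) - 1) <= e k) -> Un_cv e 0 -> False.
Proof.
  intros He Ha Hae Hcv.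
  assert (Hp : forall k, 0 < a k) by (intro k; specialize (Ha k); lra).
  assert (Hc : Un_cv (fun n => phi (a n)) 1).
  { intros eps' Heps'.
    destruct (Hcv (eps' * eps)) as [N HN]; [nra|].
    exists N; intros n Hn. specialize (HN n Hn). unfold R_dist in *.
    rewrite Rminus_0_r in HN.
    specialize (Hphi_range (a n) (Hp n)). specialize (Ha n). specialize (Hae n).
    rewrite Rabs_right by lra. apply Rabs_def2 in HN.
    assert (eps * (phi (a n) - 1) <= a n * (phi (a n) - 1)) by nra.
    nra. }
  specialize (Hphi a Hp Hc). destruct (Hphi eps He) as [N HN].
  specialize (HN N (le_n N)). specialize (Ha N). unfold R_dist in HN.
  rewrite Rminus_0_r in HN. apply Rabs_def2 in HN. lra.
Qed.

Lemma cv_sub (d : nat -> R) (f : nat -> nat) :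
  (forall k, (k <= f k)%nat) -> Un_cv d 0 -> Un_cv (fun k => d (f k)) 0.
Proof.
  intros Hf H eps He. destruct (H eps He) as [N HN]. exists N.
  intros n Hn. apply HN. specialize (Hf n). lia.
Qed.

Theorem corollary2p6 (X : Type) (x0 : X) (sigma : X -> X -> R)
  (Hml : metric_like sigma) (Hcomp : ml_complete sigma)
  (phi : R -> R)
  (Hphi_range : forall t, 0 < t -> 1 < phi t)
  (Hphi : forall t : nat -> R, (forall n, 0 < t n) ->
            Un_cv (fun n => phi (t n)) 1 -> Un_cv t 0)
  (S T : X -> X)
  (HS : forall y, exists x, S x = y)
  (HT : forall y, exists x, T x = y)
  (Hcontr : forall x y, 0 < sigma x y ->
            phi (sigma x y) * sigma x y <= sigma (T x) (S y)) :
  exists x, T x = x /\ S x = x.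
Proof.
  destruct Hml as [Hpos [Hzero [Hsym Htri]]].
  assert (Hweak : forall a b, sigma a b <= sigma (T a) (S b)).
  { intros a b. destruct (Rle_lt_or_eq_dec 0 (sigma a b) (Hpos a b)) as [h|h].
    - specialize (Hcontr a b h). specialize (Hphi_range _ h). nra.
    - rewrite <- h. apply Hpos. }
  pose (fT := fun y => proj1_sig (constructive_indefinite_description _ (HT y))).
  pose (fS := fun y => proj1_sig (constructive_indefinite_description _ (HS y))).
  assert (HfT : forall y, T (fT y) = y).
  { intro y. unfold fT. destruct (constructive_indefinite_description _ (HT y)); auto. }
  assert (HfS : forall y, S (fS y) = y).
  { intro y. unfold fS. destruct (constructive_indefinite_description _ (HS y)); auto. }
  clearbody fT fS.
  pose (xs := fix xs (n : nat) : X := match n with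
                | O => x0
                | Datatypes.S m => if Nat.even m then fT (xs m) else fS (xs m) end).
  assert (TX : forall n, Nat.Even n -> T (xs (Datatypes.S n)) = xs n).
  { intros n Hn. apply Nat.even_spec in Hn. simpl. rewrite Hn. apply HfT. }
  assert (SX : forall n, Nat.Odd n -> S (xs (Datatypes.S n)) = xs n).
  { intros n Hn. assert (Nat.even n = false).
    { destruct (Nat.even n) eqn:E; auto. apply Nat.even_spec in E.
      exfalso; eapply Nat.Even_Odd_False; eauto. }
    simpl. rewrite H. apply HfS. }
  clearbody xs.
  set (P := fun i j => (Nat.Even i /\ Nat.Odd j) \/ (Nat.Odd i /\ Nat.Even j)).
  assert (KEY : forall i j, P i j ->
     sigma (xs (Datatypes.S i)) (xs (Datatypes.S j)) <= sigma (xs i) (xs j) /\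
     (0 < sigma (xs (Datatypes.S i)) (xs (Datatypes.S j)) ->
      phi (sigma (xs (Datatypes.S i)) (xs (Datatypes.S j))) *
        sigma (xs (Datatypes.S i)) (xs (Datatypes.S j)) <= sigma (xs i) (xs j))).
  { intros i j [[Hi Hj]|[Hi Hj]].
    - assert (E : sigma (xs i) (xs j) = sigma (T (xs (Datatypes.S i))) (S (xs (Datatypes.S j))))
        by (rewrite (TX i Hi), (SX j Hj); reflexivity).
      rewrite E. split; [apply Hweak|apply Hcontr].
    - assert (E : sigma (xs i) (xs j) = sigma (T (xs (Datatypes.S j))) (S (xs (Datatypes.S i))))
        by (rewrite (TX j Hj), (SX i Hi); apply Hsym).
      rewrite E, (Hsym (xs (Datatypes.S i))). split; [apply Hweak|apply Hcontr]. }
  assert (PS : forall n, P n (Datatypes.S n)).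
  { intro n. unfold P. destruct (Nat.Even_or_Odd n) as [h|h].
    - left. split; auto. apply Nat.Odd_succ; auto.
    - right. split; auto. apply Nat.Even_succ; auto. }
  assert (PSS : forall i j, P i j -> P (Datatypes.S i) (Datatypes.S j)).
  { unfold P; intros i j [[a b]|[a b]].
    - right. split; [apply Nat.Odd_succ|apply Nat.Even_succ]; auto.
    - left. split; [apply Nat.Even_succ|apply Nat.Odd_succ]; auto. }
  set (d := fun n => sigma (xs n) (xs (Datatypes.S n))).
  assert (Ddec : Un_decreasing d).
  { intro n. unfold d. apply (KEY n (Datatypes.S n) (PS n)). }
  assert (Dcv : Un_cv d 0).
  { destruct (decreasing_cv d Ddec) as [r Hr].
    { exists 0. intros y [n ->]. unfold opp_seq, d. pose proof (Hpos (xs n) (xs (Datatypes.S n))). lra. }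
    assert (r0 : 0 <= r).
    { apply Rnot_lt_le; intro hr. destruct (Hr (- r)) as [N HN]; [lra|].
      specialize (HN N (le_n N)). unfold R_dist in HN. apply Rabs_def2 in HN.
      specialize (Hpos (xs N) (xs (Datatypes.S N))). unfold d in HN. lra. }
    destruct (Rle_lt_or_eq_dec 0 r r0) as [hr|hr]; [|subst r; auto].
    exfalso.
    apply (phi_lemma phi Hphi_range Hphi (fun k => d (Datatypes.S k))
             (fun k => d k - d (Datatypes.S k)) r hr).
    - intro k. apply decreasing_ineq; auto.
    - intro k. assert (h1 : r <= d (Datatypes.S k)) by (apply decreasing_ineq; auto).
      destruct (KEY _ _ (PS k)) as [_ h2]. unfold d in *. specialize (h2 ltac:(lra)). lra.
    - intros e he. destruct (Hr (e/2)) as [N HN]; [lra|]. exists N. intros n Hn.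
      pose proof (HN n Hn). pose proof (HN (Datatypes.S n) ltac:(lia)).
      unfold R_dist in *. apply Rabs_def2 in H. apply Rabs_def2 in H0.
      apply Rabs_def1; lra. }
  assert (C1 : forall eps, eps > 0 -> exists N, forall i j, (i >= N)%nat -> (j >= N)%nat ->
            P i j -> sigma (xs (Datatypes.S i)) (xs (Datatypes.S j)) < eps).
  { intros eps He. apply NNPP; intro Hn.
    assert (Hex : forall N, exists ij : nat * nat, (fst ij >= N)%nat /\ (snd ij >= N)%nat /\
              P (fst ij) (snd ij) /\
              eps <= sigma (xs (Datatypes.S (fst ij))) (xs (Datatypes.S (snd ij)))).
    { intro N. apply NNPP; intro H1. apply Hn. exists N. intros i j hi hj hp.
      apply Rnot_le_lt. intro h. apply H1. exists (i, j). simpl. auto. }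
    pose (g := fun N => proj1_sig (constructive_indefinite_description _ (Hex N))).
    assert (Hg : forall N, (fst (g N) >= N)%nat /\ (snd (g N) >= N)%nat /\
              P (fst (g N)) (snd (g N)) /\
              eps <= sigma (xs (Datatypes.S (fst (g N)))) (xs (Datatypes.S (snd (g N))))).
    { intro N. unfold g. destruct (constructive_indefinite_description _ (Hex N)); auto. }
    clearbody g.
    apply (phi_lemma phi Hphi_range Hphi
             (fun k => sigma (xs (Datatypes.S (fst (g k)))) (xs (Datatypes.S (snd (g k)))))
             (fun k => d (fst (g k)) + d (snd (g k))) eps He).
    - intro k. apply Hg.
    - intro k. destruct (Hg k) as [_ [_ [hp he]]].
      set (i := fst (g k)) in *. set (j := snd (g k)) in *.
      destruct (KEY i j hp) as [_ h2]. specialize (h2 ltac:(lra)).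
      pose proof (Htri (xs i) (xs (Datatypes.S i)) (xs j)).
      pose proof (Htri (xs (Datatypes.S i)) (xs (Datatypes.S j)) (xs j)).
      pose proof (Hsym (xs j) (xs (Datatypes.S j))).
      unfold d. lra.
    - intros e he. destruct (cv_sub d (fun k => fst (g k)) (fun k => proj1 (Hg k)) Dcv (e/2))
        as [N1 H1]; [lra|].
      destruct (cv_sub d (fun k => snd (g k)) (fun k => proj1 (proj2 (Hg k))) Dcv (e/2))
        as [N2 H2]; [lra|].
      exists (max N1 N2). intros n hn.
      specialize (H1 n ltac:(lia)). specialize (H2 n ltac:(lia)).
      unfold R_dist in *. rewrite Rminus_0_r in *.
      apply Rabs_def2 in H1. apply Rabs_def2 in H2. apply Rabs_def1; lra. }
  assert (DL : double_lim (fun n m => sigma (xs n) (xs m)) 0).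
  { intros eps He. destruct (C1 (eps/2)) as [N1 H1]; [lra|].
    destruct (Dcv (eps/2)) as [N2 H2]; [lra|].
    exists (Datatypes.S (max N1 N2)). intros n m hn hm.
    rewrite Rminus_0_r. rewrite Rabs_right by (apply Rle_ge, Hpos).
    destruct n as [|n]; [lia|]. destruct m as [|m]; [lia|].
    assert (hd : forall k, (k >= N2)%nat -> d k < eps/2).
    { intros k hk. specialize (H2 k hk). unfold R_dist in H2. rewrite Rminus_0_r in H2.
      apply Rabs_def2 in H2. lra. }
    destruct (Nat.Even_or_Odd n) as [en|on]; destruct (Nat.Even_or_Odd m) as [em|om].
    - (* same parity: go via m+2 *)
      assert (hp : P n (Datatypes.S m)) by (left; split; [|apply Nat.Odd_succ]; auto).
      specialize (H1 n (Datatypes.S m) ltac:(lia) ltac:(lia) hp).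
      pose proof (Htri (xs (Datatypes.S n)) (xs (Datatypes.S (Datatypes.S m))) (xs (Datatypes.S m))).
      pose proof (hd (Datatypes.S m) ltac:(lia)). unfold d in H0.
      rewrite Hsym in H0. lra.
    - assert (hp : P n m) by (left; auto). specialize (H1 n m ltac:(lia) ltac:(lia) hp). lra.
    - assert (hp : P n m) by (right; auto). specialize (H1 n m ltac:(lia) ltac:(lia) hp). lra.
    - assert (hp : P n (Datatypes.S m)) by (right; split; [|apply Nat.Even_succ]; auto).
      specialize (H1 n (Datatypes.S m) ltac:(lia) ltac:(lia) hp).
      pose proof (Htri (xs (Datatypes.S n)) (xs (Datatypes.S (Datatypes.S m))) (xs (Datatypes.S m))).
      pose proof (hd (Datatypes.S m) ltac:(lia)). unfold d in H0.
      rewrite Hsym in H0. lra. }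
  destruct (Hcomp xs (ex_intro _ 0 DL)) as [z [DLz Cz]].
  assert (zz : sigma z z = 0).
  { apply Rle_antisym; [|apply Hpos]. apply Rnot_lt_le; intro h.
    destruct (DL (sigma z z / 2)) as [N1 H1]; [lra|].
    destruct (DLz (sigma z z / 2)) as [N2 H2]; [lra|].
    specialize (H1 (max N1 N2) (max N1 N2) ltac:(lia) ltac:(lia)).
    specialize (H2 (max N1 N2) (max N1 N2) ltac:(lia) ltac:(lia)).
    apply Rabs_def2 in H1. apply Rabs_def2 in H2. lra. }
  unfold ml_converges in Cz. rewrite zz in Cz.
  assert (small : forall c, 0 <= c -> (forall e, e > 0 -> c < e) -> c = 0).
  { intros c hc hce. apply Rle_antisym; auto. apply Rnot_lt_le; intro h.
    specialize (hce c h). lra. }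
  assert (Cz' : forall e, e > 0 -> exists N, forall n, (n >= N)%nat -> sigma (xs n) z < e).
  { intros e he. destruct (Cz e he) as [N HN]. exists N. intros n hn.
    specialize (HN n hn). unfold R_dist in HN. rewrite Rminus_0_r in HN.
    apply Rabs_def2 in HN. lra. }
  assert (Ev : forall k, Nat.Even (2 * k)%nat) by (intro k; exists k; auto).
  assert (Od : forall k, Nat.Odd (2 * k + 1)%nat) by (intro k; exists k; auto).
  exists z. split.
  - assert (hu : fT z = z).
    { apply Hzero. apply small; [apply Hpos|]. intros e he.
      destruct (Cz' (e/2)) as [N HN]; [lra|].
      pose proof (Hweak (fT z) (xs (Datatypes.S (2 * N + 1)))).
      rewrite HfT, (SX _ (Od N)) in H.
      pose proof (Htri (fT z) (xs (Datatypes.S (2 * N + 1))) z).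
      pose proof (HN (Datatypes.S (2*N+1)) ltac:(lia)).
      pose proof (HN (2*N+1)%nat ltac:(lia)). rewrite (Hsym z) in H. lra. }
    rewrite <- hu at 1. apply HfT.
  - assert (hv : fS z = z).
    { apply Hzero. apply small; [apply Hpos|]. intros e he.
      destruct (Cz' (e/2)) as [N HN]; [lra|].
      pose proof (Hweak (xs (Datatypes.S (2 * N))) (fS z)).
      rewrite HfS, (TX _ (Ev N)) in H.
      pose proof (Htri (fS z) (xs (Datatypes.S (2 * N))) z).
      pose proof (HN (Datatypes.S (2*N)) ltac:(lia)).
      pose proof (HN (2*N)%nat ltac:(lia)). rewrite (Hsym (fS z) (xs _)) in H0. lra. }
    rewrite <- hv at 1. apply HfS.
Qed.
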